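(* If $\theta_0,\theta_1\in V_\Lambda\setminus\mathcal W(\mathcal G)$ lie in different path components of $V_\Lambda\setminus\mathcal W(\mathcal G)$, then $\mathcal P(\theta_0)\ne\mathcal P(\theta_1)$.
   Context: Let $\Lambda$ be a finite dimensional algebra over a field with $n$ isoclasses of simple modules, and $\mathrm{mod}\text-\Lambda$ the category of finitely generated right $\Lambda$-modules. Fix a torsion class $\mathcal G\subseteq\mathrm{mod}\text-\Lambda$ (closed under isomorphisms, extensions and quotients). For $B\in\mathcal G$, a subobject of $B$ is a submodule in $\mathcal G$; a subobject $A\subseteq B$ is strict if $A\cap B'\in\mathcal G$ for every subobject $B'$ of $B$; a strict quotient of $B$ is $B/A$ with $A$ a strict subobject. Let $V_\Lambda=\mathrm{Hom}_{\mathbb Z}(K_0\Lambda,\mathbb R)\cong\mathbb R^n$ (with its Euclidean topology); $\theta(M)$ denotes $\theta$ applied to the dimension vector of $M$. For $M\in\mathcal G$, the pseudo-wall $D_{\mathcal G}(M)$ is the set of $\theta\in V_\Lambda$ with $\theta(M)=0$ and $\theta(M')\le0$ for every strict subobject $M'$ of $M$. $\mathcal W(\theta)$ is the class of $X\in\mathcal G$ with $\theta\in D_{\mathcal G}(X)$, and $\mathcal W(\mathcal G)$ is the set of $\theta$ with $\mathcal W(\theta)\ne\{0\}$, equivalently the union of the $D_{\mathcal G}(M)$ over nonzero $M\in\mathcal G$. $\mathcal P(\theta)$ is the class consisting of $0$ and all nonzero $M\in\mathcal G$ such that $\theta(M'')>0$ for every nonzero strict quotient $M''$ of $M$ (including $M''=M$).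 *)

(* Defs.v *)
From HB Require Import structures.
From mathcomp Require Import all_boot all_order all_algebra.
From mathcomp Require Import falgebra.
From mathcomp Require Import all_classical all_reals all_analysis.

Set Implicit Arguments.
Unset Strict Implicit.
Unset Printing Implicit Defensive.

Import Order.TTheory GRing.Theory Num.Theory numFieldNormedType.Exports.
Local Open Scope ring_scope.

Section Modules.

Variables (F : fieldType) (A : falgType F).

(* A finitely generated right A-module, given concretely as a finite-dimensional
   F-vector space F^rdim (row vectors) with a right action
   m . a := m *m ract a. *)
Record rmod := RMod { rdim : nat; ract : A -> 'M[F]_rdim }.

Definition is_rmod (M : rmod) : Prop :=
  [/\ forall (c : F) (a b : A), ract M (c *: a + b) = c *: ract M a + ract M b,
      ract M 1 = 1%:M
    & forall a b : A, ract M (a * b) = ract M a *m ract M b].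

(* Submodules of M are the A-stable subspaces (row spaces of square matrices). *)
Definition stable (M : rmod) (U : 'M[F]_(rdim M)) : Prop :=
  forall a : A, (U *m ract M a <= U)%MS.

Definition submod (M : rmod) (U : 'M[F]_(rdim M)) : rmod :=
  @RMod (\rank U)
    (fun a => row_base U *m ract M a *m (invmx (row_ebase U) *m pid_mx (\rank U))).

(* The quotient module M / U (coordinates in a basis of a complement). *)
Definition quotmod (M : rmod) (U : 'M[F]_(rdim M)) : rmod :=
  @RMod (\rank (cokermx U))
    (fun a => (row_base (cokermx U) *m row_ebase U) *m ract M a *m col_base (cokermx U)).

Definition rmod_iso (M N : rmod) : Prop :=
  exists (f : 'M[F]_(rdim M, rdim N)) (g : 'M[F]_(rdim N, rdim M)),
    [/\ f *m g = 1%:M, g *m f = 1%:M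
      & forall a : A, ract M a *m f = f *m ract N a].

Definition simple_rmod (M : rmod) : Prop :=
  (0 < rdim M)%N /\
  forall U : 'M[F]_(rdim M), stable U -> U = 0 \/ row_full U.

Definition torsion_class (G : rmod -> Prop) : Prop :=
  [/\ forall M N, is_rmod M -> is_rmod N -> rmod_iso M N -> G M -> G N,
      forall M (U : 'M[F]_(rdim M)), is_rmod M -> stable U ->
        G (submod U) -> G (quotmod U) -> G M
    & forall M (U : 'M[F]_(rdim M)), is_rmod M -> stable U -> G M -> G (quotmod U)].

(* (n, S, dimv) describes K_0: S enumerates the isoclasses of simple modules
   without repetition, and dimv is the dimension vector (composition
   multiplicities), characterised as the iso-invariant function additive on
   short exact sequences with dimv (S i) = e_i. *)
Definition dimension_vector (n : nat) (S : 'I_n -> rmod)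
    (dimv : rmod -> 'I_n -> nat) : Prop :=
  [/\ forall i, is_rmod (S i) /\ simple_rmod (S i),
      forall i j, rmod_iso (S i) (S j) -> i = j,
      forall M, is_rmod M -> simple_rmod M -> exists i, rmod_iso M (S i)
    & forall i j, dimv (S i) j = (i == j : nat)] /\
  [/\ forall M N, is_rmod M -> is_rmod N -> rmod_iso M N -> dimv M = dimv N
    & forall M (U : 'M[F]_(rdim M)), is_rmod M -> stable U ->
        forall i, dimv M i = (dimv (submod U) i + dimv (quotmod U) i)%N].

Section Stability.

Variables (R : realType) (n : nat) (dimv : rmod -> 'I_n -> nat)
  (G : rmod -> Prop).

(* theta(M) for theta in V_Lambda = Hom(K_0, R) = R^n. *)
Definition theta_of (theta : 'I_n -> R) (M : rmod) : R :=
  \sum_(i < n) theta i * (dimv M i)%:R.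

Definition subobj (B : rmod) (U : 'M[F]_(rdim B)) : Prop :=
  stable U /\ G (submod U).

Definition strict_subobj (B : rmod) (U : 'M[F]_(rdim B)) : Prop :=
  subobj U /\ forall U' : 'M[F]_(rdim B), subobj U' -> G (submod (U :&: U')%MS).

Definition pseudo_wall (M : rmod) (theta : 'I_n -> R) : Prop :=
  theta_of theta M = 0 /\
  forall U : 'M[F]_(rdim M), strict_subobj U -> theta_of theta (submod U) <= 0.

Definition wall_set (theta : 'I_n -> R) : Prop :=
  exists X : rmod, [/\ is_rmod X, G X, (0 < rdim X)%N & pseudo_wall X theta].

Definition Pclass (theta : 'I_n -> R) (M : rmod) : Prop :=
  rdim M = 0%N \/
  (G M /\ forall U : 'M[F]_(rdim M), strict_subobj U ->
     (0 < rdim (quotmod U))%N -> 0 < theta_of theta (quotmod U)).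

Definition path_connected_outside_walls (theta0 theta1 : 'I_n -> R) : Prop :=
  exists gamma : R -> 'I_n -> R,
    [/\ forall i, ({within `[(0 : R), 1], continuous (fun t => gamma t i)})%classic,
        gamma 0 = theta0, gamma 1 = theta1
      & forall t, 0 <= t <= 1 -> ~ wall_set (gamma t)].

End Stability.
End Modules.

(* Main.v *)
Require Import Defs.
From HB Require Import structures.
From mathcomp Require Import all_boot all_order all_algebra.
From mathcomp Require Import falgebra.
From mathcomp Require Import all_classical all_reals all_analysis.
Import Order.TTheory GRing.Theory Num.Theory numFieldNormedType.Exports.
Local Open Scope ring_scope.
From mathcomp Require Import lra ring.
From Stdlib Require Classical.
Set Implicit Arguments.
Unset Strict Implicit.

Section Gen.
Variables (F : fieldType) (A : falgType F).
Local Notation rmod := (@rmod F A).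

Definition subp (M : rmod) k (B : 'M[F]_(k, rdim M)) (E : 'M[F]_(rdim M, k)) : rmod :=
  @RMod F A k (fun a => B *m ract M a *m E).

Lemma projE k n (B : 'M[F]_(k,n)) E m (C : 'M[F]_(m,n)) :
  B *m E = 1%:M -> (C <= B)%MS -> C *m E *m B = C.
Proof. move=> BE /submxP [D ->]. by rewrite -!mulmxA (mulmxA B) BE mul1mx. Qed.

Lemma subp_rmod (M : rmod) k (B : 'M[F]_(k, rdim M)) E : is_rmod M -> B *m E = 1%:M ->
  (forall a, (B *m ract M a <= B)%MS) -> is_rmod (subp B E).
Proof.
case=> Hl H1 Hm BE St; split.
- by move=> c a b /=; rewrite Hl mulmxDr mulmxDl -scalemxAr -!scalemxAl.
- by rewrite /subp /= H1 mulmx1 BE.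
- by move=> a b; rewrite /subp /= Hm !mulmxA (projE BE (St a)).
Qed.

Lemma iso_sym (M N : rmod) : rmod_iso M N -> rmod_iso N M.
Proof.
case=> f [g [fg gf H]]; exists g, f; split=> // a.
have := congr1 (fun X => g *m X *m g) (H a).
by rewrite !mulmxA gf mul1mx -!mulmxA fg mulmx1 => <-.
Qed.

Lemma iso_trans (M N P : rmod) : rmod_iso M N -> rmod_iso N P -> rmod_iso M P.
Proof.
case=> f [g [fg gf H]] [f' [g' [fg' gf' H']]]; exists (f *m f'), (g' *m g); split.
- by rewrite mulmxA -(mulmxA f) fg' mulmx1 fg.
- by rewrite mulmxA -(mulmxA g') gf mulmx1 gf'.
- by move=> a; rewrite mulmxA H -mulmxA H' mulmxA.
Qed.

Lemma iso_ext k (f g : A -> 'M[F]_k) : (forall a, f a = g a) ->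
  rmod_iso (RMod f) (RMod g).
Proof. by move=> e; exists 1%:M, 1%:M; split; rewrite ?mulmx1 // => a /=; rewrite mulmx1 mul1mx e. Qed.

Lemma mx_dim0 m n (X Y : 'M[F]_(m,n)) : m = 0%N -> X = Y.
Proof. by move=> e; subst m; rewrite [X]flatmx0 [Y]flatmx0. Qed.

Lemma rmod0_is (M : rmod) : rdim M = 0%N -> is_rmod M.
Proof. by move=> e; split; intros; apply: mx_dim0. Qed.

Lemma iso0 (M N : rmod) : rdim M = 0%N -> rdim N = 0%N -> rmod_iso M N.
Proof. by move=> eM eN; exists 0, 0; split; intros; apply: mx_dim0. Qed.

Lemma iso_pres (M : rmod) k1 k2 (B1 : 'M[F]_(k1, rdim M)) E1 (B2 : 'M[F]_(k2, rdim M)) E2 :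
  B1 *m E1 = 1%:M -> B2 *m E2 = 1%:M -> (B1 <= B2)%MS -> (B2 <= B1)%MS ->
  (forall a, (B1 *m ract M a <= B1)%MS) ->
  rmod_iso (subp B1 E1) (subp B2 E2).
Proof.
move=> BE1 BE2 s12 s21 St; exists (B1 *m E2), (B2 *m E1); split.
- by rewrite mulmxA (projE BE2 s12) BE1.
- by rewrite mulmxA (projE BE1 s21) BE2.
- move=> a /=. rewrite !mulmxA (projE BE1 (St a)).
  by rewrite (projE BE2 s12).
Qed.

Definition Esub (M : rmod) (U : 'M[F]_(rdim M)) : 'M[F]_(rdim M, \rank U) :=
  invmx (row_ebase U) *m pid_mx (\rank U).

Lemma submodE (M : rmod) (U : 'M[F]_(rdim M)) : submod U = subp (row_base U) (Esub U).
Proof. by []. Qed.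

Lemma row_baseE (M : rmod) (U : 'M[F]_(rdim M)) : row_base U *m Esub U = 1%:M.
Proof.
rewrite /row_base /Esub /= mulmxA -(mulmxA (pid_mx _)) mulmxV ?row_ebase_unit //.
by rewrite mulmx1 mul_pid_mx !minnn (minn_idPr (rank_leq_col U)) pid_mx_1.
Qed.

Lemma stable_rb (M : rmod) (U : 'M[F]_(rdim M)) : stable U ->
  forall a, (row_base U *m ract M a <= row_base U)%MS.
Proof. by move=> St a; rewrite !eq_row_base (eqmxMr _ (eq_row_base U)) St. Qed.

Lemma submod_rmod (M : rmod) (U : 'M[F]_(rdim M)) : is_rmod M -> stable U -> is_rmod (submod U).
Proof. move=> HM St; exact: subp_rmod HM (row_baseE U) (stable_rb St). Qed.

Lemma iso_eqsub (M : rmod) (U V : 'M[F]_(rdim M)) : stable U -> (U :=: V)%MS ->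
  rmod_iso (submod U) (submod V).
Proof.
move=> St e; apply: iso_pres (row_baseE U) (row_baseE V) _ _ (stable_rb St).
- by rewrite !eq_row_base e.
- by rewrite !eq_row_base e.
Qed.


Lemma capmxMfree m1 m2 n p (A1 : 'M[F]_(m1,n)) (A2 : 'M[F]_(m2,n)) (B : 'M[F]_(n,p)) :
  row_free B -> ((A1 :&: A2) *m B :=: A1 *m B :&: A2 *m B)%MS.
Proof.
move=> fB; apply/eqmxP; rewrite -(mxrank_leqif_eq (capmxMr _ _ _)).2.
rewrite mxrankMfree //; apply/eqP.
have e1 := mxrank_sum_cap A1 A2; have e2 := mxrank_sum_cap (A1 *m B) (A2 *m B).
rewrite -(addsmxMr A1 A2 B) !mxrankMfree // in e2.
by apply/eqP; rewrite -(eqn_add2l (\rank (A1 + A2)%MS)) e1 e2.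
Qed.

Lemma stable_cap (M : rmod) (U W : 'M[F]_(rdim M)) : stable U -> stable W -> stable (U :&: W)%MS.
Proof.
move=> SU SW a; rewrite sub_capmx; apply/andP; split.
- exact: submx_trans (submxMr _ (capmxSl _ _)) (SU a).
- exact: submx_trans (submxMr _ (capmxSr _ _)) (SW a).
Qed.

Section Lift.
Variables (X : rmod) (U : 'M[F]_(rdim X)).
Local Notation B := (row_base U).
Local Notation E := (Esub U).
Local Notation sU := (submod U).

Definition lift (V : 'M[F]_(rdim sU)) : 'M[F]_(rdim X) := <<V *m B>>%MS.

Lemma stab_lift m (W : 'M[F]_(m, rdim sU)) : stable U ->
  (forall a, (W *m ract sU a <= W)%MS) -> forall a, (W *m B *m ract X a <= W *m B)%MS.
Proof.
move=> SU SW a.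
have e : W *m B *m ract X a = W *m ract sU a *m B.
  change (ract sU a) with (B *m ract X a *m E).
  by rewrite -[RHS]mulmxA (projE (row_baseE U) (stable_rb SU a)) [RHS]mulmxA.
rewrite e; apply: (submxMr B); exact: SW.
Qed.

Lemma lift_stable (V : 'M[F]_(rdim sU)) : stable U -> stable V -> stable (lift V).
Proof.
move=> SU SV a; rewrite /lift (eqmxMr _ (genmxE _)) genmxE; exact: stab_lift.
Qed.

Lemma lift_iso (V : 'M[F]_(rdim sU)) : stable U -> stable V ->
  rmod_iso (submod V) (submod (lift V)).
Proof.
move=> SU SV; apply: (@iso_trans _ (subp (row_base V *m B) (E *m Esub V))).
  by apply: iso_ext => a /=; rewrite !mulmxA.
apply: iso_pres (row_baseE _) _ _ _.
- by rewrite mulmxA -(mulmxA (row_base V)) row_baseE mulmx1 row_baseE.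
- by rewrite eq_row_base /lift genmxE; apply: submxMr; rewrite eq_row_base.
- by rewrite eq_row_base /lift genmxE; apply: submxMr; rewrite eq_row_base.
- exact: stab_lift SU (stable_rb SV).
Qed.

Lemma lift_rank (V : 'M[F]_(rdim sU)) : \rank (lift V) = \rank V.
Proof. by rewrite /lift genmxE mxrankMfree // row_base_free. Qed.

Lemma lift_sub (V : 'M[F]_(rdim sU)) : (lift V <= U)%MS.
Proof. by rewrite /lift genmxE; apply: submx_trans (submxMl V _) _; rewrite eq_row_base. Qed.

Lemma lift_full (V : 'M[F]_(rdim sU)) : \rank V = \rank U -> (lift V :=: U)%MS.
Proof.
move=> e; apply/eqmxP; rewrite -(mxrank_leqif_eq (lift_sub V)).2.
by rewrite lift_rank e.
Qed.

Lemma lift_cap (V W : 'M[F]_(rdim sU)) : (lift (V :&: W) :=: lift V :&: lift W)%MS.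
Proof.
apply: eqmx_trans (genmxE _) _; apply: eqmx_trans (capmxMfree _ _ (row_base_free U)) _.
apply: eqmx_sym; exact: cap_eqmx (genmxE _) (genmxE _).
Qed.

Lemma lift_coords (W : 'M[F]_(rdim X)) : (W <= U)%MS -> (lift <<W *m E>> :=: W)%MS.
Proof.
move=> sWU; apply: eqmx_trans (genmxE _) _; apply: eqmx_trans (eqmxMr _ (genmxE _)) _.
rewrite projE //; first exact: row_baseE.
by rewrite eq_row_base.
Qed.

End Lift.

Section Strict.
Variable (G : rmod -> Prop).
Hypothesis Hiso : forall M N, is_rmod M -> is_rmod N -> rmod_iso M N -> G M -> G N.

Lemma lift_strict (X : rmod) (U : 'M[F]_(rdim X)) (V : 'M[F]_(rdim (submod U))) :
  is_rmod X -> strict_subobj G U -> strict_subobj G V -> strict_subobj G (lift V).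
Proof.
move=> HX [[SU GU] sU'] [[SV GV] sV'].
have HU := submod_rmod HX SU.
have SL := lift_stable SU SV.
split; first split => //.
  apply: Hiso (lift_iso SU SV) GV; [exact: submod_rmod HU SV | exact: submod_rmod HX SL].
move=> W [SW GW].
pose W0 : 'M[F]_(rdim (submod U)) := <<(U :&: W) *m Esub U>>%MS.
have SUW := stable_cap SU SW.
have SW0 : stable W0.
  move=> a; rewrite (eqmxMr _ (genmxE _)) genmxE.
  change (ract (submod U) a) with (row_base U *m ract X a *m Esub U).
  rewrite mulmxA [_ *m (_ *m ract X a)]mulmxA projE; first exact: submxMr.
    exact: row_baseE.
  by rewrite eq_row_base capmxSl.
have eW0 : (lift W0 :=: U :&: W)%MS by apply: lift_coords; exact: capmxSl.
have GW0 : G (submod W0).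
  apply: Hiso (sU' W (conj SW GW)); [exact: submod_rmod HX SUW | exact: submod_rmod HU SW0|].
  apply: iso_trans (iso_eqsub SUW (eqmx_sym eW0)) _.
  exact: iso_sym (lift_iso SU SW0).
have SVW0 := stable_cap SV SW0.
apply: Hiso (sV' W0 (conj SW0 GW0)); [exact: submod_rmod HU SVW0 | |].
  exact: submod_rmod HX (stable_cap SL SW).
apply: iso_trans (lift_iso SU SVW0) _.
apply: iso_eqsub; first exact: lift_stable SU SVW0.
apply: eqmx_trans (lift_cap V W0) _.
apply: eqmx_trans (cap_eqmx (eqmx_refl _) eW0) _.
rewrite capmxA; exact: cap_eqmx (capmx_idPl (lift_sub V)) (eqmx_refl W).
Qed.

End Strict.

Section Theta.
Variables (R : realType) (n : nat) (dimv : rmod -> 'I_n -> nat) (G : rmod -> Prop).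
Hypothesis Hdiso : forall M N, is_rmod M -> is_rmod N -> rmod_iso M N -> dimv M = dimv N.
Hypothesis Hadd : forall M (U : 'M[F]_(rdim M)), is_rmod M -> stable U ->
        forall i, dimv M i = (dimv (submod U) i + dimv (quotmod U) i)%N.
Hypothesis Hiso : forall M N, is_rmod M -> is_rmod N -> rmod_iso M N -> G M -> G N.
Hypothesis Hq : forall M (U : 'M[F]_(rdim M)), is_rmod M -> stable U -> G M -> G (quotmod U).

Lemma theta_iso (th : 'I_n -> R) M N : is_rmod M -> is_rmod N -> rmod_iso M N ->
  theta_of dimv th M = theta_of dimv th N.
Proof. by move=> HM HN i; rewrite /theta_of (Hdiso HM HN i). Qed.

Lemma theta_add (th : 'I_n -> R) M (U : 'M[F]_(rdim M)) : is_rmod M -> stable U ->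
  theta_of dimv th M = theta_of dimv th (submod U) + theta_of dimv th (quotmod U).
Proof.
move=> HM SU; rewrite /theta_of -big_split; apply: eq_bigr => i _.
by rewrite (Hadd HM SU) natrD mulrDr.
Qed.

Lemma stable0 (M : rmod) : stable (0 : 'M[F]_(rdim M)).
Proof. by move=> a; rewrite mul0mx sub0mx. Qed.

Lemma stable1 (M : rmod) : stable (1%:M : 'M[F]_(rdim M)).
Proof. by move=> a; rewrite submx1. Qed.

Lemma theta0 (th : 'I_n -> R) Z : is_rmod Z -> rdim Z = 0%N -> theta_of dimv th Z = 0.
Proof.
move=> HZ e; have := theta_add th HZ (stable0 Z).
have e1 : rdim (submod (0 : 'M[F]_(rdim Z))) = 0%N by rewrite /= mxrank0.
have e2 : rdim (quotmod (0 : 'M[F]_(rdim Z))) = 0%N by rewrite /= mxrank_coker mxrank0 e.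
rewrite -(theta_iso th HZ (rmod0_is e1) (iso0 e e1)).
rewrite -(theta_iso th HZ (rmod0_is e2) (iso0 e e2)).
move=> *; lra.
Qed.

Lemma iso_self (M : rmod) : rmod_iso M (subp (1%:M : 'M[F]_(rdim M)) 1%:M).
Proof. by exists 1%:M, 1%:M; split; rewrite ?mulmx1 // => a /=; rewrite !mulmx1 !mul1mx. Qed.

Lemma iso_full (M : rmod) : is_rmod M -> rmod_iso M (submod (1%:M : 'M[F]_(rdim M))).
Proof.
move=> HM; apply: iso_trans (iso_self M) _.
apply: iso_pres (row_baseE _) _ _ _.
- by rewrite mulmx1.
- by rewrite eq_row_base submx1.
- by rewrite submx1.
- by move=> a; rewrite submx1.
Qed.

Lemma rmod_full (M : rmod) : is_rmod M -> is_rmod (submod (1%:M : 'M[F]_(rdim M))).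
Proof. by move=> HM; apply: submod_rmod HM (stable1 M). Qed.

Lemma G_zero (M Z : rmod) : is_rmod M -> G M -> rdim Z = 0%N -> G Z.
Proof.
move=> HM GM eZ.
have e : rdim (quotmod (1%:M : 'M[F]_(rdim M))) = 0%N by rewrite /= mxrank_coker mxrank1 subnn.
apply: Hiso (Hq HM (stable1 M) GM); [exact: rmod0_is e | exact: rmod0_is eZ | exact: iso0].
Qed.

Lemma strict0 (M : rmod) : is_rmod M -> G M -> strict_subobj G (0 : 'M[F]_(rdim M)).
Proof.
move=> HM GM; split; first split.
- exact: stable0.
- by apply: G_zero HM GM _; rewrite /= mxrank0.
- by move=> U' _; apply: G_zero HM GM _; rewrite /= cap0mx mxrank0.
Qed.

Lemma strict1 (M : rmod) : is_rmod M -> G M -> strict_subobj G (1%:M : 'M[F]_(rdim M)).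
Proof.
move=> HM GM; split; first split.
- exact: stable1.
- exact: Hiso HM (rmod_full HM) (iso_full HM) GM.
- move=> U' [SU' GU']; rewrite cap1mx //.
Qed.

Lemma Ppos (th : 'I_n -> R) (Y : rmod) : is_rmod Y -> (0 < rdim Y)%N ->
  Pclass dimv G th Y -> 0 < theta_of dimv th Y.
Proof.
move=> HY dY [e|[GY HP]]; first by rewrite e in dY.
have := HP _ (strict0 HY GY).
rewrite /= mxrank_coker mxrank0 subn0 => /(_ dY).
have e1 : rdim (submod (0 : 'M[F]_(rdim Y))) = 0%N by rewrite /= mxrank0.
by rewrite (theta_add th HY (stable0 Y)) (theta0 th (submod_rmod HY (stable0 Y)) e1) add0r.
Qed.


Lemma keyA (th : 'I_n -> R) (X : rmod) : is_rmod X -> ~ wall_set dimv G th ->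
  (forall U : 'M[F]_(rdim X), strict_subobj G U -> (0 < \rank U)%N ->
     ~ Pclass dimv G th (submod U)) ->
  forall U : 'M[F]_(rdim X), strict_subobj G U -> (0 < \rank U)%N ->
    theta_of dimv th (submod U) < 0.
Proof.
move=> HX nW HP U.
move: {2}(\rank U) (leqnn (\rank U)) => k; elim: k U => [|k IH] U leUk sU rU.
  by move: (leq_trans rU leUk).
have [[SU GU] _] := sU.
have HsU := submod_rmod HX SU.
set th' := theta_of dimv th.
have Hlt : forall V : 'M[F]_(rdim (submod U)), strict_subobj G V -> (0 < \rank V)%N ->
    (\rank V < \rank U)%N -> th' (submod V) < 0.
  move=> V sV rV ltV.
  have [[SV _] _] := sV.
  rewrite /th' (theta_iso th (submod_rmod HsU SV) (submod_rmod HX (lift_stable SU SV)) (lift_iso SU SV)).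
  apply: IH; [| | by rewrite lift_rank]. 2: by have := lift_strict Hiso HX sU sV.
  by rewrite lift_rank -ltnS (leq_trans ltV leUk).
have Heq : forall V : 'M[F]_(rdim (submod U)), stable V -> \rank V = \rank U ->
    th' (submod V) = th' (submod U).
  move=> V SV e.
  rewrite /th' (theta_iso th (submod_rmod HsU SV) (submod_rmod HX (lift_stable SU SV)) (lift_iso SU SV)).
  apply: theta_iso; [exact: submod_rmod HX (lift_stable SU SV) | exact: HsU | ].
  exact: iso_eqsub (lift_stable SU SV) (lift_full e).
have nP := HP U sU rU.
have : ~ (forall V : 'M[F]_(rdim (submod U)), strict_subobj G V ->
           (0 < rdim (quotmod V))%N -> 0 < th' (quotmod V)).
  by move=> H; apply: nP; right; split.
case/Classical_Pred_Type.not_all_ex_not => V HV.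
have [sV HV2] := Classical_Prop.imply_to_and _ _ HV.
have [qV nq] := Classical_Prop.imply_to_and _ _ HV2.
rewrite /= mxrank_coker subn_gt0 in qV.
have [[SV _] _] := sV.
have eadd : th' (submod U) = th' (submod V) + th' (quotmod V) := theta_add th HsU SV.
have nq' : th' (quotmod V) <= 0 by rewrite leNgt; apply/negP.
have [r0|rpos] := posnP (\rank V); last first.
  have := Hlt V sV rpos qV; lra.
have e0 : th' (submod V) = 0 by apply: theta0 (submod_rmod HsU SV) _.
case: (ltP (th' (submod U)) 0) => // ge0.
have z : th' (submod U) = 0 by lra.
exfalso; apply: nW; exists (submod U); split => //; split => // V' sV'.
have [[SV' _] _] := sV'.
have [r0'|rpos'] := posnP (\rank V').
  by rewrite (theta0 th (submod_rmod HsU SV') r0').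
have := rank_leq_row V'; rewrite leq_eqVlt => /orP [/eqP e|lt].
  by rewrite -/th' (Heq V' SV' e) z.
by apply/ltW; apply: Hlt.
Qed.

Lemma mainAux (th0 th1 : 'I_n -> R) :
  ~ wall_set dimv G th0 -> ~ wall_set dimv G th1 ->
  (forall M : rmod, is_rmod M -> (Pclass dimv G th0 M <-> Pclass dimv G th1 M)) ->
  path_connected_outside_walls dimv G th0 th1.
Proof.
move=> nW0 nW1 HPe.
exists (fun t i => th0 i + t * (th1 i - th0 i)); split.
- move=> i; apply: continuous_subspaceT => x.
  apply: (@continuousD _ _ _ (fun=> th0 i) (fun t : R => t * (th1 i - th0 i))).
    exact: cst_continuous.
  apply: (@continuousM _ _ id (fun=> th1 i - th0 i)); [exact: cvg_id | exact: cst_continuous].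
- by apply/funext => i; rewrite mul0r addr0.
- by apply/funext => i; rewrite mul1r addrC subrK.
move=> t /andP[t0 t1] [X [HX GX dX [pw0 pw]]].
have lin : forall M, theta_of dimv (fun i => th0 i + t * (th1 i - th0 i)) M =
    theta_of dimv th0 M + t * (theta_of dimv th1 M - theta_of dimv th0 M).
  move=> M; rewrite /theta_of -sumrB mulr_sumr -big_split; apply: eq_bigr => i _ /=; ring.
have HP : forall th, (th = th0 \/ th = th1) -> forall U : 'M[F]_(rdim X),
    strict_subobj G U -> (0 < \rank U)%N -> ~ Pclass dimv G th (submod U).
  move=> th eth U sU rU Pth.
  have [[SU _] _] := sU; have HsU := submod_rmod HX SU.
  have [P0 P1] : Pclass dimv G th0 (submod U) /\ Pclass dimv G th1 (submod U).
    by case: eth Pth => -> Pth; split => //; [apply: (HPe _ HsU).1 | apply: (HPe _ HsU).2].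

  have := Ppos HsU rU P0; have := Ppos HsU rU P1; have := pw U sU; rewrite lin => *; nra.
have r1 : (0 < \rank (1%:M : 'M[F]_(rdim X)))%N by rewrite mxrank1.
have n0 := keyA HX nW0 (HP th0 (or_introl erefl)) (strict1 HX GX) r1.
have n1 := keyA HX nW1 (HP th1 (or_intror erefl)) (strict1 HX GX) r1.
have := pw0; rewrite (theta_iso _ HX (rmod_full HX) (iso_full HX)) lin => *; nra.
Qed.

End Theta.
End Gen.

Unset Implicit Arguments.
Set Strict Implicit.

Theorem mainTheorem15 (F : fieldType) (A : falgType F) (n : nat)
  (S : 'I_n -> rmod A) (dimv : rmod A -> 'I_n -> nat)
  (G : rmod A -> Prop) (R : realType) (theta0 theta1 : 'I_n -> R) :
  dimension_vector S dimv ->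
  torsion_class G ->
  ~ wall_set dimv G theta0 ->
  ~ wall_set dimv G theta1 ->
  ~ path_connected_outside_walls dimv G theta0 theta1 ->
  ~ (forall M : rmod A, is_rmod M ->
       (Pclass dimv G theta0 M <-> Pclass dimv G theta1 M)).
Proof.
move=> [_ [Hdiso Hadd]] [Hiso _ Hq] nW0 nW1 nP Heq; apply: nP.
by apply: (mainAux Hdiso Hadd Hiso Hq).
Qed.
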